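(* Let $R$ be a simple path in $T$ with consecutive vertices $r_1,\dots,r_m$, let $k$ be an integer with $2\le k\le m$, put $N=m-k+1$, and for $j=1,\dots,N$ let $P_j$ be the path $r_j,\dots,r_{j+k-1}$. Assume $|P_j|=l$ for all $j$. Then $\min_{1\le j\le N}\overline{S}(P_j)=\min\{\overline{S}(P_1),\overline{S}(P_N)\}$, i.e. the minimum of the mean service time over these shifted paths is attained at one of the two extreme positions.
   Context: Let $T=(V,E)$ be a finite tree with vertex set $V=\{v_1,\dots,v_n\}$ and positive edge lengths; $d(x,y)$ denotes the length of the unique path in $T$ between vertices $x,y$. Each vertex $v_i$ has a weight $w_i\ge 0$ with $w(T)=\sum_i w_i=1$. A path $P$ is the vertex sequence $p(1),\dots,p(k)$ of a simple path in $T$; $|P|=d(p(1),p(k))$. For $v\in V$, $p_P(v)$ denotes the unique vertex of $P$ closest to $v$. For a vertex $p$ of $P$, the branch $T_p$ (with respect to $P$) is the set of vertices $v$ with $p_P(v)=p$, and $w_{T_p}=\sum_{v_i\in T_p}w_i$. For a vertex $p$ of $P$ put $\overline{d}_P(p)=\sum_{j=1}^k w_{T_{p(j)}}\,d(p(j),p)$. Fix a speed $v_t>0$ and a constant $\overline{G}\ge0$. Define $\overline{T}_2(P)=\frac{1}{v_t}\sum_i w_i\,\overline{d}_P(p_P(v_i))$ and $\overline{S}(P)=\overline{T}_2(P)+\overline{G}$. *)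

(* Defs.v *)
From HB Require Import structures.
From mathcomp Require Import all_boot all_order all_algebra.
From Stdlib Require Import ClassicalEpsilon.
Set Implicit Arguments. Unset Strict Implicit. Unset Printing Implicit Defensive.
Import Order.TTheory GRing.Theory Num.Theory.
Local Open Scope ring_scope.

Section TreeDefs.
Variables (R : realFieldType) (T : finType).
Variable e : rel T.
Variable len : T -> T -> R.

Definition simple_path (x : T) (p : seq T) : bool := path e x p && uniq (x :: p).

Definition is_tree : Prop :=
  symmetric e /\ irreflexive e /\
  (forall x y : T, exists p, simple_path x p /\ last x p = y) /\
  (forall x p q, simple_path x p -> simple_path x q -> last x p = last x q -> p = q).

Definition pos_lengths : Prop :=
  (forall x y, e x y -> 0 < len x y) /\ (forall x y, len x y = len y x).

Fixpoint walk_len (x : T) (p : seq T) : R :=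
  if p is y :: p' then len x y + walk_len y p' else 0.

Definition tpath (x y : T) : seq T :=
  epsilon (inhabits [::]) (fun p => simple_path x p /\ last x p = y).

Definition dist (x y : T) : R := walk_len x (tpath x y).

(* path P given as its vertex sequence p(1),...,p(k) *)
Definition plen (P : seq T) : R :=
  if P is x :: _ then dist x (last x P) else 0.

Definition proj (P : seq T) (v : T) : T :=
  [arg min_(u < head v P in P) dist v u]%O.

Definition branch_w (w : T -> R) (P : seq T) (p : T) : R :=
  \sum_(v : T | proj P v == p) w v.

Definition dbar (w : T -> R) (P : seq T) (p : T) : R :=
  \sum_(q <- P) branch_w w P q * dist q p.

Definition T2bar (w : T -> R) (vt : R) (P : seq T) : R :=
  vt^-1 * \sum_(v : T) w v * dbar w P (proj P v).

Definition Sbar (w : T -> R) (vt G : R) (P : seq T) : R := T2bar w vt P + G.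

End TreeDefs.

(* P_j (0-based j) = r_{j+1}, ..., r_{j+k} *)
Definition subpath (T : Type) (r : seq T) (k j : nat) : seq T := take k (drop j r).

(* Main.v *)
Require Import Defs.
From HB Require Import structures.
From mathcomp Require Import all_boot all_order all_algebra.
From mathcomp Require Import zify ring lra.
From Stdlib Require Import ClassicalEpsilon.
Import Order.TTheory GRing.Theory Num.Theory.
Local Open Scope ring_scope.

Lemma window_min (R : realFieldType) (F D : nat -> R) (n : nat) :
  (forall i, (i < n)%N -> F i.+1 = F i + D i) ->
  (forall i i', (i < i')%N -> (i' < n)%N -> D i < 0 -> D i' <= 0) ->
  forall j, (j <= n)%N -> Num.min (F 0%N) (F n) <= F j.
Proof.
move=> HF HD j jn.
case: (boolP (has (fun i => D i < 0) (iota 0 j))) => [/hasP [i] | /hasPn H].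
  rewrite mem_iota add0n => /andP [_ ij] Di.
  suff: forall d, (j + d <= n)%N -> F (j + d)%N <= F j.
    move=> H0; have Hn := H0 (n - j)%N ltac:(lia).
    rewrite (_ : (j + (n - j))%N = n) in Hn; last by lia.
    by rewrite ge_min Hn orbT.
  elim=> [|d IH] Hd; first by rewrite addn0.
  rewrite addnS HF; last by lia.
  apply: le_trans (IH _); last by lia.
  have := HD i (j + d)%N ltac:(lia) ltac:(lia) Di; lra.
suff: forall d, (d <= j)%N -> F 0%N <= F d.
  by move=> /(_ j (leqnn _)) H0; rewrite ge_min H0.
elim=> [|d IH] Hd //.
rewrite HF; last by lia.
have := IH ltac:(lia).
have := H d; rewrite mem_iota add0n => /(_ ltac:(lia)).
rewrite -leNgt; lra.
Qed.

Definition clampn (lo hi a : nat) : nat := minn (maxn a lo) hi.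

Section RealPart.
Variable R : realFieldType.
Implicit Types (pos : nat -> R).

Lemma sum_lt pos (M y : nat) : (y <= M)%N ->
  \sum_(t < M) (t < y)%N%:R * (pos t.+1 - pos t) = pos y - pos 0%N.
Proof.
move=> yM.
rewrite (eq_bigr (fun t : 'I_M => if (t < y)%N then pos t.+1 - pos t else 0)); last first.
  by move=> i _; case: ifP; rewrite ?mul1r ?mul0r.
rewrite -big_mkcond /= -(big_ord_widen _ (fun t => pos t.+1 - pos t) yM) -(big_mkord xpredT (fun t => pos t.+1 - pos t)).
by rewrite telescope_sumr.
Qed.

Lemma sum_int pos (M x y : nat) : (x <= y)%N -> (y <= M)%N ->
  \sum_(t < M) ((x <= t)%N && (t < y)%N)%:R * (pos t.+1 - pos t) = pos y - pos x.
Proof.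
move=> xy yM.
have -> : pos y - pos x = (pos y - pos 0%N) - (pos x - pos 0%N) by ring.
rewrite -(@sum_lt pos M y yM) -(@sum_lt pos M x (leq_trans xy yM)).
rewrite -sumrB; apply: eq_bigr => t _.
case: (leqP x t) => Hx; case: (ltnP t y) => Hy /=; rewrite ?mul1r ?mul0r; try lra.
all: exfalso; lia.
Qed.

Lemma sum_eq (M a : nat) (G : nat -> R) : (a < M)%N ->
  \sum_(t < M) (t == a :> nat)%:R * G t = G a.
Proof.
move=> aM; rewrite (bigD1 (Ordinal aM)) //= eqxx mul1r big1 ?addr0 //.
move=> i /eqP Hi; suff -> : (i == a :> nat) = false by rewrite mul0r.
apply/eqP => E; apply: Hi; exact: val_inj.
Qed.


Lemma abs_cl pos (m j J a b : nat) : (j <= J)%N -> (J < m)%N ->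
  (forall t, (t.+1 < m)%N -> pos t <= pos t.+1) ->
  `|pos (clampn j J a) - pos (clampn j J b)| =
  \sum_(t < m) (((j <= t)%N && (t < J)%N) &&
     (((a <= t)%N && (t < b)%N) || ((b <= t)%N && (t < a)%N)))%:R * (pos t.+1 - pos t).
Proof.
move=> jJ Jm mono.
wlog ab : a b / (a <= b)%N.
  move=> Hw; case: (leqP a b) => Hab; first exact: Hw.
  rewrite distrC Hw; last by lia.
  by apply: eq_bigr => t _; rewrite [X in _ && X]orbC.
rewrite /clampn.
rewrite distrC ger0_norm.
  rewrite -(@sum_int pos m); [|lia|lia].
  apply: eq_bigr => t _; congr (_%:R * _); lia.
rewrite -(@sum_int pos m); [|lia|lia].
apply: sumr_ge0 => t _.
case: (boolP (_ && _)) => H; rewrite ?mul1r ?mul0r //.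
rewrite subr_ge0; apply: mono; lia.
Qed.


Section Main.
Variables (I : finType) (w : I -> R) (c : I -> nat) (pos : nat -> R) (m k : nat) (l : R).

Definition Fw (j : nat) : R :=
  \sum_(v : I) \sum_(u : I) w v * w u *
     `|pos (clampn j (j + k.-1) (c u)) - pos (clampn j (j + k.-1) (c v))|.

Definition Lw (t : nat) : R := \sum_(u : I) w u * (c u <= t)%N%:R.
Definition Hw (t : nat) : R := \sum_(v : I) \sum_(u : I) w v * w u *
   ((((c u <= t)%N && (t < c v)%N) || ((c v <= t)%N && (t < c u)%N)))%:R.
Definition dl (t : nat) : R := pos t.+1 - pos t.
Definition Gw (t : nat) : R := dl t * Hw t.

Hypothesis mono : forall t, (t.+1 < m)%N -> pos t <= pos t.+1.
Hypothesis w_ge0 : forall u, 0 <= w u.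
Hypothesis w_sum : \sum_(u : I) w u = 1.
Hypothesis k2 : (2 <= k)%N.
Hypothesis km : (k <= m)%N.

Lemma Fw_sum j : (j <= m - k)%N ->
  Fw j = \sum_(t < m) ((j <= t)%N && (t < j + k.-1)%N)%:R * Gw t.
Proof.
move=> jm; rewrite /Fw.
under eq_bigr => v _.
  under eq_bigr => u _.
    rewrite (@abs_cl pos m j (j + k.-1) (c u) (c v)); [|lia|lia|exact: mono].
    rewrite mulr_sumr.
  over.
  rewrite exchange_big /=.
over.
rewrite exchange_big /=; apply: eq_bigr => t _.
rewrite /Gw /Hw /dl mulr_sumr mulr_sumr; apply: eq_bigr => v _.
rewrite !mulr_sumr; apply: eq_bigr => u _.
rewrite -mulnb natrM; ring.
Qed.

Lemma Lw_mono t t' : (t <= t')%N -> Lw t <= Lw t'.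
Proof.
move=> tt'; apply: ler_sum => u _; apply: ler_wpM2l => //.
case: (leqP (c u) t) => H; last by rewrite ler0n.
by rewrite (_ : (c u <= t')%N) //; lia.
Qed.

Lemma Hw_L t : Hw t = 2 * Lw t * (1 - Lw t).
Proof.
rewrite /Hw.
have E : forall v, \sum_(u : I) w v * w u *
   ((((c u <= t)%N && (t < c v)%N) || ((c v <= t)%N && (t < c u)%N)))%:R
   = w v * ((c v <= t)%N%:R + (1 - 2 * (c v <= t)%N%:R) * Lw t).
  move=> v.
  have -> : w v * ((c v <= t)%N%:R + (1 - 2 * (c v <= t)%N%:R) * Lw t) =
     \sum_(u : I) w v * (w u * (c v <= t)%N%:R + (1 - 2 * (c v <= t)%N%:R) * (w u * (c u <= t)%N%:R)).
    rewrite -mulr_sumr big_split /= -mulr_suml -mulr_sumr w_sum /Lw; ring.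
  apply: eq_bigr => u _.
  rewrite !ltnNge; case: (c u <= t)%N; case: (c v <= t)%N => /=; ring.
under eq_bigr => v _ do rewrite E.
have -> : \sum_(v : I) w v * ((c v <= t)%N%:R + (1 - 2 * (c v <= t)%N%:R) * Lw t)
  = \sum_(v : I) (w v * (c v <= t)%N%:R * (1 - 2 * Lw t) + Lw t * w v).
  by apply: eq_bigr => v _; ring.
rewrite big_split /= -mulr_suml -mulr_sumr w_sum -/(Lw t); ring.
Qed.


Lemma Fw_step j : (j < m - k)%N -> Fw j.+1 = Fw j + (Gw (j + k.-1) - Gw j).
Proof.
move=> jm; rewrite !Fw_sum; [|lia|lia].
have ha : (j + k.-1 < m)%N by lia.
have hj : (j < m)%N by lia.
rewrite -(@sum_eq m _ Gw ha) -(@sum_eq m _ Gw hj) -sumrB -big_split /=.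
apply: eq_bigr => t _.
have E : ((j.+1 <= t)%N && (t < j.+1 + k.-1)%N + (t == j :> nat))%N =
         ((t == j + k.-1 :> nat) + ((j <= t)%N && (t < j + k.-1)%N))%N by lia.
have /(congr1 (fun n : nat => n%:R : R)) := E; rewrite !natrD => E'.
have -> : ((j.+1 <= t)%N && (t < j.+1 + k.-1)%N)%:R =
  (((t == j + k.-1 :> nat))%:R + ((j <= t)%N && (t < j + k.-1)%N)%:R - (t == j :> nat)%:R : R).
  by rewrite -E'; ring.
ring.
Qed.

Hypothesis hl : forall j, (j <= m - k)%N -> pos (j + k.-1) - pos j = l.

Lemma dlE i : (i < m - k)%N -> dl (i + k.-1) = dl i.
Proof.
move=> im; rewrite /dl.
have h1 := hl _ (ltnW im); have h2 := hl i.+1 im.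
rewrite (_ : (i.+1 + k.-1)%N = (i + k.-1).+1) in h2; last by lia.
lra.
Qed.

Lemma real_main j : (j <= m - k)%N ->
  Num.min (Fw 0%N) (Fw (m - k)) <= Fw j.
Proof.
apply: (@window_min R Fw (fun i => Gw (i + k.-1) - Gw i)); first exact: Fw_step.
move=> i i' ii' i'n.
rewrite /Gw !Hw_L !dlE; [|lia|lia].
have a1 := @Lw_mono i i' (ltnW ii').
have b1 := @Lw_mono (i + k.-1)%N (i' + k.-1)%N ltac:(lia).
have ab := @Lw_mono i (i + k.-1)%N ltac:(lia).
have ab' := @Lw_mono i' (i' + k.-1)%N ltac:(lia).
have d0 : 0 <= dl i by rewrite subr_ge0; apply: mono; lia.
have d0' : 0 <= dl i' by rewrite subr_ge0; apply: mono; lia.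
set a := Lw i in a1 ab *; set a' := Lw i' in a1 ab' *.
set b := Lw (i + k.-1)%N in b1 ab *; set b' := Lw (i' + k.-1)%N in b1 ab' *.
move=> Di.
have Hs : 1 < a + b.
  rewrite ltNge; apply/negP => H.
  have : 0 <= dl i * (b - a) * (1 - a - b).
    apply: mulr_ge0; [apply: mulr_ge0 => //; lra| lra].
  move: Di; nra.
have : 0 <= dl i' * (b' - a') * (a' + b' - 1).
  apply: mulr_ge0; [apply: mulr_ge0 => //; lra| lra].
nra.
Qed.

End Main.
End RealPart.


Section Tree.
Set Implicit Arguments. Unset Strict Implicit.
Variables (R : realFieldType) (T : finType) (e : rel T) (len : T -> T -> R).
Hypothesis Htree : is_tree e.
Hypothesis Hlen : pos_lengths e len.

Lemma tpath_spec x y : simple_path e x (tpath e x y) /\ last x (tpath e x y) = y.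
Proof.
rewrite /tpath.
apply: (epsilon_spec (inhabits [::]) (fun p => simple_path e x p /\ last x p = y)).
case: Htree => _ [_ [H _]]; exact: H.
Qed.

Lemma tpath_eq {x p} : simple_path e x p -> tpath e x (last x p) = p.
Proof.
move=> Hp; case: (tpath_spec x (last x p)) => H1 H2.
case: Htree => _ [_ [_ H]]; exact: H H1 Hp H2.
Qed.

Lemma dist_path {x p} : simple_path e x p -> dist e len x (last x p) = walk_len len x p.
Proof. by move=> Hp; rewrite /dist tpath_eq. Qed.

Lemma walk_len_cat x p q :
  walk_len len x (p ++ q) = walk_len len x p + walk_len len (last x p) q.
Proof. by elim: p x => [|y p IH] x /=; rewrite ?add0r // IH addrA. Qed.

Lemma walk_len_ge0 {x p} : path e x p -> 0 <= walk_len len x p.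
Proof.
elim: p x => [|y p IH] x //= /andP [exy Hp].
have := IH _ Hp; have : 0 < len x y by case: Hlen => H _; exact: H.
lra.
Qed.

Lemma walk_len_gt0 {x p} : path e x p -> p != [::] -> 0 < walk_len len x p.
Proof.
case: p => [|y p] //= /andP [exy Hp] _.
have := walk_len_ge0 Hp; have : 0 < len x y by case: Hlen => H _; exact: H.
lra.
Qed.

Lemma walk_len_rcons (x : T) (p : seq T) (z : T) :
  walk_len len x (rcons p z) = walk_len len x p + len (last x p) z.
Proof. by rewrite -cats1 walk_len_cat /= addr0. Qed.

Lemma last_rev_belast (x : T) (p : seq T) : last (last x p) (rev (belast x p)) = x.
Proof.
case: p => [|y p] //=; rewrite rev_cons last_rcons //.
Qed.

Lemma walk_len_rev x p :
  walk_len len (last x p) (rev (belast x p)) = walk_len len x p.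
Proof.
elim: p x => [|y p IH] x //=.
rewrite rev_cons walk_len_rcons IH last_rev_belast.
case: Hlen => _ ->; ring.
Qed.

Lemma simple_path_rev {x p} :
  simple_path e x p -> simple_path e (last x p) (rev (belast x p)).
Proof.
case: Htree => esym _.
rewrite /simple_path => /andP [Hp Hu]; apply/andP; split.
  rewrite rev_path (@eq_path _ _ e) // => a b /=; exact: esym.
by rewrite -rev_rcons -lastI rev_uniq.
Qed.

Lemma dist_sym x y : dist e len x y = dist e len y x.
Proof.
case: (tpath_spec x y) => Hs Hl.
have := dist_path (simple_path_rev Hs); rewrite last_rev_belast walk_len_rev Hl.
by move=> ->; rewrite /dist.
Qed.

Lemma dist_ge0 x y : 0 <= dist e len x y.
Proof.
case: (tpath_spec x y) => /andP [Hp _] _; exact: walk_len_ge0.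
Qed.

Lemma simple_cat {v q s} :
  simple_path e v q -> simple_path e (last v q) s ->
  (forall z, z \in v :: q -> z \in s -> z = last v q) ->
  simple_path e v (q ++ s).
Proof.
move=> /andP [Hq Uq] /andP [Hs Us] Hz; apply/andP; split.
  by rewrite cat_path Hq.
rewrite -cat_cons cat_uniq Uq /=; move: Us => /= /andP [ns ->]; rewrite andbT.
apply/hasPn => z zs; apply/negP => zq.
by move: ns; rewrite -(Hz z zq zs) zs.
Qed.

End Tree.
Unset Implicit Arguments. Set Strict Implicit.


Section OnR.
Variables (R : realFieldType) (T : finType) (e : rel T) (len : T -> T -> R).
Hypothesis Htree : is_tree e.
Hypothesis Hlen : pos_lengths e len.
Variables (x0 : T) (p0 : seq T).
Hypothesis Hr : simple_path e x0 p0.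

Local Notation r := (x0 :: p0).
Local Notation m := (size (x0 :: p0)).
Local Notation rr t := (nth x0 (x0 :: p0) t).

Definition pos (t : nat) : R := \sum_(s < t) len (rr s) (rr s.+1).

Lemma r_uniq : uniq r.
Proof. by case/andP: Hr. Qed.

Lemma edge {t} : (t.+1 < m)%N -> e (rr t) (rr t.+1).
Proof.
move=> tm; case/andP: Hr => /(pathP x0) H _.
exact: (H t tm).
Qed.

Lemma posS t : pos t.+1 = pos t + len (rr t) (rr t.+1).
Proof. by rewrite /pos big_ord_recr. Qed.

Lemma len_pos {t} : (t.+1 < m)%N -> 0 < len (rr t) (rr t.+1).
Proof. move=> tm; case: Hlen => H _; exact: H _ _ (edge tm). Qed.

Lemma pos_lt {a b} : (a < b)%N -> (b < m)%N -> pos a < pos b.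
Proof.
elim: b => [|b IH] // ab bm.
rewrite posS; have := len_pos bm.
case: (ltngtP a b) => H.
- have := IH H ltac:(lia); lra.
- lia.
- by rewrite H; lra.
Qed.

Lemma pos_le {a b} : (a <= b)%N -> (b < m)%N -> pos a <= pos b.
Proof.
rewrite leq_eqVlt => /orP [/eqP -> //| ab] bm.
exact/ltW/pos_lt.
Qed.

Definition seg (i n : nat) : seq T := [seq rr t | t <- iota i.+1 n].

Lemma seg_prop {n i} : (i + n < m)%N ->
  [/\ path e (rr i) (seg i n), last (rr i) (seg i n) = rr (i + n)
   & walk_len len (rr i) (seg i n) = pos (i + n) - pos i].
Proof.
elim: n i => [|n IH] i H.
  by rewrite /seg /= addn0 subrr.
have [H1 H2 H3] := IH i.+1 ltac:(lia).
rewrite /seg /= -/(seg i.+1 n); split.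
- by rewrite edge ?H1 //; lia.
- by rewrite H2 addnS.
- by rewrite H3 posS addnS -addSn; ring.
Qed.

Lemma seg_uniq i n : (i + n < m)%N -> uniq (rr i :: seg i n).
Proof.
move=> H.
have -> : rr i :: seg i n = [seq rr t | t <- iota i n.+1] by [].
rewrite map_inj_in_uniq ?iota_uniq // => a b.
rewrite !mem_iota => Ha Hb /eqP.
rewrite nth_uniq ?r_uniq //; try (move/eqP; done); move: Ha Hb H => /= Ha Hb H; lia.
Qed.

Lemma seg_sub i n : {subset seg i n <= r}.
Proof.
move=> z /mapP [t _ ->].
case: (ltnP t m) => H; first exact: mem_nth.
by rewrite nth_default // mem_head.
Qed.

Lemma dist_rr_le a b : (a <= b)%N -> (b < m)%N -> dist e len (rr a) (rr b) = pos b - pos a.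
Proof.
move=> ab bm.
have [H1 H2 H3] := seg_prop (n := b - a) (i := a) ltac:(lia).
have Hs : simple_path e (rr a) (seg a (b - a)) by rewrite /simple_path H1 seg_uniq //; lia.
have := dist_path len Htree Hs; rewrite H2 H3.
by rewrite (_ : (a + (b - a))%N = b) //; lia.
Qed.

Lemma dist_rr a b : (a < m)%N -> (b < m)%N ->
  dist e len (rr a) (rr b) = `|pos a - pos b|.
Proof.
move=> am bm; case: (leqP a b) => ab.
  rewrite dist_rr_le // distrC ger0_norm // subr_ge0; exact: pos_le.
rewrite (dist_sym Htree Hlen) dist_rr_le //; last exact: ltnW.
rewrite ger0_norm // subr_ge0; apply: pos_le => //; exact: ltnW.
Qed.

Lemma seg_exists {a b} : (a < m)%N -> (b < m)%N ->
  exists s, [/\ simple_path e (rr a) s, last (rr a) s = rr b & {subset s <= r}].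
Proof.
move=> am bm; case: (leqP a b) => ab.
  have [H1 H2 H3] := seg_prop (n := b - a) (i := a) ltac:(lia).
  exists (seg a (b - a)); split.
  - by rewrite /simple_path H1 seg_uniq //; lia.
  - by rewrite H2 (_ : (a + (b - a))%N = b) //; lia.
  - exact: seg_sub.
have [H1 H2 H3] := seg_prop (n := a - b) (i := b) ltac:(lia).
have Hs : simple_path e (rr b) (seg b (a - b)) by rewrite /simple_path H1 seg_uniq //; lia.
have E : last (rr b) (seg b (a - b)) = rr a by rewrite H2 (_ : (b + (a - b))%N = a) //; lia.
exists (rev (belast (rr b) (seg b (a - b)))); split.
- by have := simple_path_rev Htree Hs; rewrite E.
- by rewrite -E last_rev_belast.
- move=> z; rewrite mem_rev => /mem_belast; rewrite inE => /orP [/eqP ->|].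
    exact: mem_nth.
  exact: seg_sub.
Qed.

Lemma proj_spec (P : seq T) v : P != [::] ->
  proj e len P v \in P /\ forall u, u \in P -> dist e len v (proj e len P v) <= dist e len v u.
Proof.
case: P => [|x s] // _; rewrite /proj /=.
case: arg_minP; first exact: mem_head.
move=> y Hy Hmin; split => // u Hu; exact: Hmin.
Qed.

Definition cidx (v : T) : nat := index (proj e len r v) r.

Lemma cidx_lt v : (cidx v < m)%N.
Proof. by rewrite /cidx index_mem; case: (proj_spec r v). Qed.

Lemma closest v a : (a < m)%N ->
  dist e len v (rr a) = dist e len v (rr (cidx v)) + `|pos a - pos (cidx v)|.
Proof.
move=> am.
have [yr ymin] := proj_spec r v erefl.
have Ey : rr (cidx v) = proj e len r v by rewrite nth_index.
rewrite Ey; set y := proj e len r v in yr ymin Ey *.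
have [Hq Hql] := tpath_spec Htree v y.
move: (tpath e v y) Hq Hql => q Hq Hql.
have Hz : forall z, z \in v :: q -> z \in r -> z = y.
  move=> z zq zr; apply/eqP; apply/negP => nzy.
  move: Hq Hql; case/splitPl: zq => q1 q2 Hl1 Hq Hql.
  have Hq1 : simple_path e v q1.
    rewrite /simple_path; move: Hq => /andP []; rewrite cat_path => /andP [-> _].
    by rewrite -cat_cons cat_uniq => /andP [->].
  have Hq2 : path e z q2 by move: Hq => /andP []; rewrite cat_path Hl1 => /andP [_ ->].
  have q2n : q2 != [::].
    apply/negP => /eqP E; move: Hql; rewrite E cats0 Hl1 => E'.
    by move: nzy; rewrite E' eqxx.
  have D1 := dist_path len Htree Hq1; rewrite Hl1 in D1.
  have D2 := dist_path len Htree Hq; rewrite Hql walk_len_cat Hl1 in D2.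
  have := walk_len_gt0 Hlen Hq2 q2n.
  have := ymin z zr; lra.
have [s [Hs Hsl Hsr]] := seg_exists (cidx_lt v) am.
rewrite Ey in Hs Hsl.
have Hqs : simple_path e v (q ++ s).
  apply: simple_cat => //; first by rewrite Hql.
  move=> z zq zs; rewrite Hql; exact: Hz zq (Hsr z zs).
have := dist_path len Htree Hqs; rewrite last_cat Hql Hsl walk_len_cat Hql => ->.
have := dist_path len Htree Hq; rewrite Hql => <-.
have := dist_path len Htree Hs; rewrite Hsl => <-.
by rewrite -Ey dist_rr ?cidx_lt // distrC.
Qed.


Lemma sub_eq k j : (j + k <= m)%N -> subpath r k j = [seq rr t | t <- iota j k].
Proof.
move=> H; apply: (@eq_from_nth _ x0).
  by rewrite size_map size_iota /subpath size_takel // size_drop; lia.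
move=> i; rewrite /subpath size_takel ?size_drop; last by lia.
move=> ik; rewrite nth_take // nth_drop (nth_map 0%N) ?size_iota // nth_iota //.
Qed.

Lemma argmin_pos (a c j J : nat) : (j <= a)%N -> (a <= J)%N -> (J < m)%N -> (c < m)%N ->
  `|pos a - pos c| <= `|pos (clampn j J c) - pos c| -> a = clampn j J c.
Proof.
move=> ja aJ Jm cm; rewrite /clampn.
have [cl Ecl] : {cl | minn (maxn c j) J = cl} by exists (minn (maxn c j) J).
rewrite Ecl => H.
have clm : (cl < m)%N by lia.
case: (ltngtP a cl) => // Hac; exfalso.
- have ccl : (cl <= c)%N by lia.
  have h1 := pos_lt Hac clm; have h2 := pos_le ccl cm.
  move: H; rewrite (ler0_norm (x := pos a - pos c)); last by lra.
  rewrite (ler0_norm (x := pos cl - pos c)); last by lra.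
  lra.
- have ccl : (c <= cl)%N by lia.
  have h1 := pos_lt Hac ltac:(lia); have h2 := pos_le ccl clm.
  move: H; rewrite (ger0_norm (x := pos a - pos c)); last by lra.
  rewrite (ger0_norm (x := pos cl - pos c)); last by lra.
  lra.
Qed.
Lemma proj_sub k j v : (1 <= k)%N -> (j + k <= m)%N ->
  proj e len (subpath r k j) v = rr (clampn j (j + k.-1) (cidx v)).
Proof.
move=> k1 H; rewrite sub_eq //.
have ne : [seq rr t | t <- iota j k] != [::].
  by case: k k1 H => // k _ _.
have [/mapP [a]] := proj_spec [seq rr t | t <- iota j k] v ne.
rewrite mem_iota => /andP [ja ajk] Ea Hmin.
rewrite Ea; congr (nth x0 r _).
have Hcl : rr (clampn j (j + k.-1) (cidx v)) \in [seq rr t | t <- iota j k].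
  apply: map_f; rewrite mem_iota /clampn; lia.
have := Hmin _ Hcl; rewrite Ea (closest v a); last by lia.
rewrite (closest v (clampn j (j + k.-1) (cidx v))); last by rewrite /clampn; lia.
rewrite lerD2l => H'.
apply: argmin_pos => //; [lia|lia|exact: cidx_lt].
Qed.

Lemma dbar_eq (w : T -> R) (P : seq T) p : uniq P -> (forall u, proj e len P u \in P) ->
  dbar e len w P p = \sum_(u : T) w u * dist e len (proj e len P u) p.
Proof.
move=> UP HP; rewrite /dbar /branch_w.
under eq_bigr => q _ do rewrite big_mkcond mulr_suml /=.
rewrite exchange_big /=; apply: eq_bigr => u _.
rewrite (bigD1_seq (proj e len P u)) //= eqxx big1 ?addr0 //.
move=> q; rewrite eq_sym => /negbTE ->; by rewrite mul0r.
Qed.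

Lemma T2bar_eq (w : T -> R) vt k j : (1 <= k)%N -> (j + k <= m)%N ->
  T2bar e len w vt (subpath r k j) = vt^-1 * Fw _ _ w cidx pos k j.
Proof.
move=> k1 H; rewrite /T2bar /Fw; congr (_ * _); apply: eq_bigr => v _.
have UP : uniq (subpath r k j).
  by rewrite /subpath take_uniq // drop_uniq // r_uniq.
have HP : forall u, proj e len (subpath r k j) u \in subpath r k j.
  move=> u; rewrite proj_sub // sub_eq //; apply: map_f; rewrite mem_iota /clampn; lia.
rewrite dbar_eq // mulr_sumr; apply: eq_bigr => u _.
rewrite !proj_sub // dist_rr; [ring| |]; rewrite /clampn; lia.
Qed.

Lemma plen_eq k j : (1 <= k)%N -> (j + k <= m)%N ->
  plen e len (subpath r k j) = pos (j + k.-1) - pos j.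
Proof.
move=> k1 H; rewrite sub_eq //.
case: k k1 H => // k _ H /=.
rewrite (last_map (fun t => rr t)).
have -> : last j (iota j.+1 k) = (j + k)%N.
  elim: k j H => [|k IH] j H /=; first by rewrite addn0.
  by rewrite IH ?addnS //; lia.
rewrite dist_rr; [|lia|lia].
rewrite distrC ger0_norm // subr_ge0; apply: pos_le; lia.
Qed.

Lemma mono_pos t : (t.+1 < m)%N -> pos t <= pos t.+1.
Proof. move=> H; apply: pos_le => //; lia. Qed.

End OnR.


Theorem corollary4 (R : realFieldType) (T : finType) (e : rel T) (len : T -> T -> R)
  (w : T -> R) (vt G l : R) (r : seq T) (k : nat) :
  is_tree e -> pos_lengths e len ->
  (forall v, 0 <= w v) -> \sum_(v : T) w v = 1 ->
  0 < vt -> 0 <= G ->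
  (* R = r_1,...,r_m is a simple path in T *)
  (exists (x : T) (p : seq T), r = x :: p /\ simple_path e x p) ->
  (2 <= k)%N -> (k <= size r)%N ->
  (forall j, (j < size r - k + 1)%N -> plen e len (subpath r k j) = l) ->
  forall j, (j < size r - k + 1)%N ->
    Num.min (Sbar e len w vt G (subpath r k 0))
            (Sbar e len w vt G (subpath r k (size r - k)))
      <= Sbar e len w vt G (subpath r k j).
Proof.
move=> Htree Hlen w0 wsum vt0 G0 [x [p [-> Hr]]] k2 km Hl j jm.
have Hmin := @real_main R T w (cidx R T e len x p) (pos R T len x p) (size (x :: p)) k l
  (mono_pos R T e len Hlen x p Hr) w0 wsum k2 km.
have Hmin' := Hmin (fun j Hj => etrans (esym (plen_eq R T e len Htree Hlen x p Hr k j ltac:(lia) ltac:(lia))) (Hl j ltac:(lia))) j ltac:(lia).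
rewrite /Sbar !(T2bar_eq R T e len Htree Hlen x p Hr); try lia.
have vi : 0 <= vt^-1 by rewrite invr_ge0 ltW.
move: Hmin'; rewrite !ge_min => /orP [] H; apply/orP; [left|right];
  rewrite lerD2r; exact: ler_wpM2l.
Qed.
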